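(* Let $\beta\subset\mathcal B$. Sending a point $N\in C_\beta^M$ to the function $(i,j)\mapsto w_{i,j}$ on $\mathrm{Rel}^2$, where $(w_{i,j})$ is the matrix representation of $N$ in $\beta$-normal form, gives a bijection between the points of $C_\beta^M$ and the total evaluations in $\mathrm{Ev}(f_\beta)$. In particular, if the $\beta$-state is contradictory (i.e. $\mathrm{Ev}(f_\beta)=\emptyset$), then $C_\beta^M$ is empty.
   Context: Let $Q$ be a quiver with finite vertex set $Q_0$ and finite arrow set $Q_1$, and $M$ a finite-dimensional complex representation of $Q$. An ordered basis of $M$ is a set $\mathcal B=\bigcup_{p\in Q_0}\mathcal B_p$, $\mathcal B_p$ a basis of $M_p$, with a total order on $\mathcal B$. For $v:p\to q$ and $i\in\mathcal B_p$ write $M_v(i)=\sum_{j\in\mathcal B_q}\mu_{v,i,j}\,j$. The coefficient quiver $\Gamma$ has vertex set $\mathcal B$ and an arrow $(v,i,j)$ from $i$ to $j$ whenever $v:p\to q$, $i\in\mathcal B_p$, $j\in\mathcal B_q$, $\mu_{v,i,j}\ne0$; $F:\Gamma\to Q$ sends $i\in\mathcal B_p$ to $p$ and $(v,i,j)$ to $v$. Schubert cells: via $\mathcal B$ identify $M$ with $\mathbb C^d$, $d=\dim M$, and a subrepresentation $N$ with the subspace $\bigoplus_pN_p$. For $\beta\subset\mathcal B$, $|\beta|=e$, and an $e$-dimensional subspace $V$ spanned by the columns of a matrix $w$, $\Delta_\beta(V)$ is the minor of $w$ with rows $\beta$. For $\beta=\{i_1<\dots<i_e\}$, $\beta'=\{j_1<\dots<j_e\}$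 set $\beta\le\beta'$ iff $i_l\le j_l$ for all $l$. $C_\beta(d)$ is the set of $e$-dimensional $V$ with $\Delta_\beta(V)\neq0$ and $\Delta_{\beta'}(V)=0$ for all $\beta'>\beta$, and $C_\beta^M$ is the set of subrepresentations $N$ of $M$ (as subspaces of dimension $|\beta|$) lying in $C_\beta(d)$. A matrix representation of $N\in C_\beta^M$ is a matrix $w=(w_{i,j})_{i,j\in\mathcal B}$ such that for each $p$ the columns $(w_{i,j})_{i\in\mathcal B_p}$, $j\in\beta\cap\mathcal B_p$, form a basis of $N_p$ and $w_{i,j}=0$ if $j\notin\beta$ or $F(i)\ne F(j)$. It is in $\beta$-normal form if $w_{i,i}=1$ for $i\in\beta$; $w_{i,j}=0$ for $i,j\in\beta$, $i\ne j$; $w_{i,j}=0$ for $j\in\beta$, $j<i$; $w_{i,j}=0$ for $j\notin\beta$; $w_{i,j}=0$ if $j\in\beta$ and $F(i)\neq F(j)$. Every $N\in C_\beta^M$ has a unique matrix representation in $\beta$-normal form. Schubert system: for $v:p\to q$, $s\in F^{-1}(p)$, $t\in F^{-1}(q)$ let $E(v,t,s)=\sum_{(v,s',t')\in\Gamma_1}\mu_{v,s',t'}w_{t,t'}w_{s',s}-\sum_{(v,s',t)\in\Gamma_1}\mu_{v,s',t}w_{s',s}$. $\mathrm{Rel}^2=\{(i,j):F(i)=F(j), i\le j\}$; $\mathrm{Rel}^3$ = set of such $(v,t,s)$ for which some $(v,s',t')\in\Gamma_1$ has $s\ge s'$, $t\le t'$. $E(v,t,s)$ is regarded as a polynomial in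 $w_{i,j}$, $(i,j)\in\mathrm{Rel}^2$ (other variables set to $0$). The Schubert system $\Sigma$ is the graph on $\mathrm{Rel}^2\sqcup\mathrm{Rel}^3$ with an edge $\{(i,j),(v,t,s)\}$ iff $w_{i,j}$ occurs in $E(v,t,s)$, with links $\lambda=((v,t,s),S)$, $S\subset\mathrm{Rel}^2$, whenever $\prod_{(i,j)\in S}w_{i,j}$ occurs in $E(v,t,s)$ with nonzero coefficient $\mu_\lambda$. A partial evaluation is a partial function $\mathrm{ev}:\mathrm{Rel}^2\dashrightarrow\mathbb C$ such that for every $(v,t,s)\in\mathrm{Rel}^3$ and every neighbour $(k,l)$ of it in $\Sigma$: if all other neighbours of $(v,t,s)$ are in the domain, then $(k,l)$ is in the domain and $\sum_{\lambda=((v,t,s),S)}\mu_\lambda\prod_{(i,j)\in S}\mathrm{ev}(i,j)=0$; it is total if its domain is $\mathrm{Rel}^2$. For $\beta\subset\mathcal B$, $f_\beta$ is the partial function on $\mathrm{Rel}^2$ with $f_\beta(i,j)=1$ if $i=j\in\beta$, $f_\beta(i,j)=0$ if $i\in\beta$ and $i\ne j$, $f_\beta(i,j)=0$ if $j\notin\beta$, undefined otherwise; $\mathrm{Ev}(f_\beta)$ is the set of partial evaluations extending $f_\beta$. The $\beta$-state is called contradictory if $\mathrm{Ev}(f_\beta)$ is empty. *)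

(* Defs.v *)
From HB Require Import structures.
From mathcomp Require Import all_boot all_order all_algebra.
From mathcomp Require Import mpoly.
Unset Printing Implicit Defensive.
Import Order.TTheory GRing.Theory.
Local Open Scope ring_scope.

(* Conventions:
   - the quiver Q has vertex type Q0 and arrow type Q1 (finite types),
     with source/target maps src tgt : Q1 -> Q0;
   - the ordered basis B of M is identified with 'I_d (d = dim M), ordered
     as the ordinals; F : 'I_d -> Q0 sends a basis element to its vertex;
   - mu v i j is the coefficient mu_{v,i,j} of j in M_v(i) (only used when
     F i = src v and F j = tgt v);
   - K is the ground field (the paper takes K = C);
   - M is identified with K^d, realised as row vectors 'rV[K]_d. *)

Section Schubert.
Variables (K : fieldType) (Q0 Q1 : finType) (src tgt : Q1 -> Q0) (d : nat)
  (F : 'I_d -> Q0) (mu : Q1 -> 'I_d -> 'I_d -> K).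

Definition gam (v : Q1) (i j : 'I_d) : bool :=
  [&& F i == src v, F j == tgt v & mu v i j != 0].

(* the linear map M_v : K^d -> K^d, row-vector convention x |-> x *m Mv v *)
Definition Mv (v : Q1) : 'M[K]_d :=
  \matrix_(i, j) (if (F i == src v) && (F j == tgt v) then mu v i j else 0).

Definition Esp (p : Q0) : {vspace 'rV[K]_d} :=
  <<[seq delta_mx (0 : 'I_1)%R i | i <- enum 'I_d & F i == p]>>%VS.

(* V (a subspace of K^d) is (the image of) a subrepresentation N of M:
   V = (+)_p N_p with N_p = V cap M_p, and M_v(N_p) subset N_q. *)
Definition is_subrep (V : {vspace 'rV[K]_d}) : Prop :=
  (V = \sum_(p : Q0) (V :&: Esp p))%VS /\
  forall v : Q1, (linfun (mulmxr (Mv v)) @: (V :&: Esp (src v)) <= V)%VS.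

(* Pluecker coordinate / minor Delta_beta(V): the minor with columns beta
   (increasingly ordered) of the matrix whose rows are a basis of V
   (rows vs columns is the transposed convention of the paper). *)
Definition minor (V : {vspace 'rV[K]_d}) (b : {set 'I_d}) : K :=
  \det (\matrix_(a < #|b|, c < #|b|) (nth 0 (vbasis V) a) 0 (enum_val c)).

Definition sq (b : {set 'I_d}) : seq nat := [seq val x | x <- enum b].

Definition set_le (b b' : {set 'I_d}) : bool :=
  (#|b| == #|b'|) &&
  all (fun l => nth 0%N (sq b) l <= nth 0%N (sq b') l)%N (iota 0 #|b|).

Definition set_lt (b b' : {set 'I_d}) : bool := set_le b b' && (b != b').

Definition in_cell (b : {set 'I_d}) (V : {vspace 'rV[K]_d}) : Prop :=
  [/\ \dim V = #|b|, minor V b != 0 &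
      forall b' : {set 'I_d}, set_lt b b' -> minor V b' = 0].

Definition in_CM (b : {set 'I_d}) (V : {vspace 'rV[K]_d}) : Prop :=
  is_subrep V /\ in_cell b V.

Definition colv (w : 'M[K]_d) (j : 'I_d) : 'rV[K]_d := \row_i w i j.

Definition matrix_rep (b : {set 'I_d}) (V : {vspace 'rV[K]_d}) (w : 'M[K]_d)
  : Prop :=
  (forall p : Q0,
      basis_of (V :&: Esp p) [seq colv w j | j <- enum b & F j == p]) /\
  (forall i j : 'I_d, (j \notin b) || (F i != F j) -> w i j = 0).

Definition normal_form (b : {set 'I_d}) (V : {vspace 'rV[K]_d}) (w : 'M[K]_d)
  : Prop :=
  matrix_rep b V w /\
  [/\ forall i : 'I_d, i \in b -> w i i = 1,
      forall i j : 'I_d, i \in b -> j \in b -> i != j -> w i j = 0,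
      forall i j : 'I_d, j \in b -> (j < i)%N -> w i j = 0,
      forall i j : 'I_d, j \notin b -> w i j = 0 &
      forall i j : 'I_d, j \in b -> F i != F j -> w i j = 0].

Definition rel2b (ij : 'I_d * 'I_d) : bool := (F ij.1 == F ij.2) && (ij.1 <= ij.2)%N.
Definition rel2 := {ij : 'I_d * 'I_d | rel2b ij}.
HB.instance Definition _ := Finite.on rel2.

Definition nvar := #|{: rel2}|.

(* the variable w_{i,j} (set to 0 if (i,j) is not in Rel^2) *)
Definition wvar (i j : 'I_d) : {mpoly K[nvar]} :=
  match insub (i, j) : option rel2 with
  | Some k => 'X_(enum_rank k)
  | None => 0
  end.

Definition Epoly (v : Q1) (t s : 'I_d) : {mpoly K[nvar]} :=
  \sum_(s' : 'I_d) \sum_(t' : 'I_d)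
     (if gam v s' t' then mu v s' t' *: (wvar t t' * wvar s' s) else 0)
  - \sum_(s' : 'I_d) (if gam v s' t then mu v s' t *: wvar s' s else 0).

Definition rel3 (v : Q1) (t s : 'I_d) : bool :=
  [&& F s == src v, F t == tgt v &
      [exists s' : 'I_d, exists t' : 'I_d,
         [&& gam v s' t', (s' <= s)%N & (t <= t')%N]]].

(* (k,l) in Rel^2 is a neighbour of (v,t,s) in Sigma: w_{k,l} occurs in E *)
Definition nbr (v : Q1) (t s : 'I_d) (k : rel2) : bool :=
  has (fun m : 'X_{1..nvar} => (0 < m (enum_rank k))%N) (msupp (Epoly v t s)).

(* partial evaluations Rel^2 -|-> K; the sum over the links of (v,t,s)
   evaluated at ev is the value of E(v,t,s) at ev (variables outside the
   domain do not occur when all neighbours are in the domain). *)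
Definition eval_at (ev : {ffun rel2 -> option K}) : 'I_nvar -> K :=
  fun x => odflt 0 (ev (enum_val x)).

Definition partial_eval (ev : {ffun rel2 -> option K}) : Prop :=
  forall (v : Q1) (t s : 'I_d), rel3 v t s ->
  forall k : rel2, nbr v t s k ->
    (forall k' : rel2, nbr v t s k' -> k' != k -> ev k' != None) ->
    ev k != None /\ (Epoly v t s).@[eval_at ev] = 0.

Definition total_ev (ev : {ffun rel2 -> option K}) : Prop :=
  forall k : rel2, ev k != None.

Definition f_beta (b : {set 'I_d}) (k : rel2) : option K :=
  let i := (val k).1 in let j := (val k).2 in
  if (i == j) && (i \in b) then Some 1
  else if (i \in b) && (i != j) then Some 0
  else if j \notin b then Some 0
  else None.

Definition in_Ev (b : {set 'I_d}) (ev : {ffun rel2 -> option K}) : Prop :=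
  partial_eval ev /\ forall k c, f_beta b k = Some c -> ev k = Some c.

End Schubert.

(* Main.v *)
Require Import Defs.
From HB Require Import structures.
From mathcomp Require Import all_boot all_order all_algebra.
From mathcomp Require Import mpoly.
From mathcomp Require Import perm ring.
From Stdlib Require Import ProofIrrelevance ClassicalEpsilon.
Set Implicit Arguments. Unset Strict Implicit. Unset Printing Implicit Defensive.
Import Order.TTheory GRing.Theory.
Local Open Scope ring_scope.


Section LA.
Variables (K : fieldType) (d : nat).
Notation rv := 'rV[K]_d.

Lemma sum_entry (I : Type) (r : seq I) (P : pred I) (k : I -> K) (X : I -> rv) i :
  (\sum_(a <- r | P a) k a *: X a) 0 i = \sum_(a <- r | P a) k a * X a 0 i.
Proof. by rewrite summxE; apply: eq_bigr => a _; rewrite mxE. Qed.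

Lemma char_minor m (X : m.-tuple rv) (V : {vspace rv}) (cols : 'I_m -> 'I_d) :
  free X -> <<X>>%VS = V ->
  (\det (\matrix_(a < m, c < m) (X`_a) 0 (cols c)) != 0) <->
  (forall x, x \in V -> (forall c, x 0 (cols c) = 0) -> x = 0).
Proof.
move=> fX sX; split.
- move=> dn x xV xc.
  have xE := coord_span (X := X) (v := x); rewrite sX in xE; have {}xE := xE xV.
  pose u := \row_i coord X i x.
  have uA : u *m \matrix_(a < m, c < m) (X`_a) 0 (cols c) = 0.
    apply/rowP => c; rewrite !mxE; transitivity (x 0 (cols c)); last exact: xc.
    rewrite {1}xE sum_entry; by apply: eq_bigr => a _; rewrite !mxE.
  have u0 : u = 0.
    apply/eqP; apply/negPn/negP => un0; move/negP: dn; apply; apply/det0P.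
    by exists u.
  rewrite xE; apply: big1 => a _.
  have := congr1 (fun M : 'rV_m => M 0 a) u0; rewrite !mxE => ->; by rewrite scale0r.
- move=> inj; apply/negP => /det0P [u un0 uA].
  pose x := \sum_(a < m) u 0 a *: X`_a.
  have xV : x \in V.
    rewrite -sX; apply: rpred_sum => a _; apply: rpredZ; apply: memv_span.
    by apply: mem_nth; rewrite size_tuple.
  have x0 : x = 0.
    apply: inj => // c; rewrite /x sum_entry.
    have E := congr1 (fun M : 'rV_m => M 0 c) uA; rewrite /= !mxE in E.
    rewrite -[RHS]E; by apply: eq_bigr => a _; rewrite !mxE.
  move/freeP: fX => /(_ (fun a => u 0 a) x0) H.
  by move/eqP: un0; apply; apply/rowP => a; rewrite H mxE.
Qed.

End LA.

Section Core.
Variables (K : fieldType) (d : nat) (b : {set 'I_d}) (w : 'M[K]_d).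
Notation rv := 'rV[K]_d.
Local Notation colv := (Defs.colv K d).
Variable W1 : forall j, j \in b -> w j j = 1.
Variable W2 : forall i j, i \in b -> j \in b -> i != j -> w i j = 0.


Lemma colv_delta j k : j \in b -> k \in b -> colv w j 0 k = (k == j)%:R.
Proof.
move=> jb kb; rewrite mxE; have [->|ne] := eqVneq k j; first by rewrite W1.
by rewrite W2.
Qed.

Definition Pr (x : rv) := \sum_(j in b) x 0 j *: colv w j.

Lemma Pr_entry x k : k \in b -> Pr x 0 k = x 0 k.
Proof.
move=> kb; rewrite /Pr sum_entry (bigD1 k) //= colv_delta // eqxx mulr1.
rewrite big1 ?addr0 // => j /andP[jb nkj]; rewrite colv_delta //.
by rewrite eq_sym (negbTE nkj) mulr0.
Qed.

Lemma Pr_col j : j \in b -> Pr (colv w j) = colv w j.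
Proof.
move=> jb; rewrite /Pr (bigD1 j) //= colv_delta // eqxx scale1r.
rewrite big1 ?addr0 // => k /andP[kb nkj]; rewrite colv_delta //.
by rewrite (negbTE nkj) scale0r.
Qed.

Lemma Pr_lin (I : Type) (r : seq I) (c : I -> K) (y : I -> rv) :
  Pr (\sum_(i <- r) c i *: y i) = \sum_(i <- r) c i *: Pr (y i).
Proof.
rewrite /Pr; under eq_bigr => j _ do rewrite sum_entry scaler_suml.
rewrite exchange_big /=; apply: eq_bigr => i _; rewrite scaler_sumr.
by apply: eq_bigr => j _; rewrite scalerA.
Qed.

Definition Xt : #|b|.-tuple rv := [tuple colv w (enum_val a) | a < #|b|].

Lemma Xt_nth (a : 'I_#|b|) : Xt`_a = colv w (enum_val a).
Proof. by rewrite nth_mktuple. Qed.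

Lemma Pr_span x : x \in <<Xt>>%VS -> Pr x = x.
Proof.
move=> /coord_span xE; rewrite [in LHS]xE Pr_lin [RHS]xE.
by apply: eq_bigr => a _; rewrite Xt_nth Pr_col // enum_valP.
Qed.

Lemma free_Xt : free Xt.
Proof.
apply/freeP => k k0 a.
have := congr1 (fun M : rv => M 0 (enum_val a)) k0; rewrite sum_entry mxE.
rewrite (bigD1 a) //= Xt_nth colv_delta ?enum_valP // eqxx mulr1.
rewrite big1 ?addr0 // => c ca; rewrite Xt_nth colv_delta ?enum_valP //.
by rewrite (inj_eq enum_val_inj) eq_sym (negbTE ca) mulr0.
Qed.

Lemma dim_Xt : \dim <<Xt>> = #|b|.
Proof. by have /eqP -> := free_Xt; rewrite size_tuple. Qed.

Lemma Xt_mem j : j \in b -> colv w j \in <<Xt>>%VS.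
Proof.
move=> jb; apply: memv_span; apply/mapP.
exists (enum_rank_in jb j); first by rewrite mem_enum.
by rewrite enum_rankK_in.
Qed.

Lemma Pr_mem (V : {vspace rv}) x : (forall j, j \in b -> colv w j \in V) ->
  Pr x \in V.
Proof. by move=> H; apply: rpred_sum => j jb; apply: rpredZ; apply: H. Qed.

Lemma core_V (V : {vspace rv}) :
  (forall x, x \in V -> (forall k, k \in b -> x 0 k = 0) -> x = 0) ->
  (forall j, j \in b -> colv w j \in V) ->
  forall x, x \in V -> Pr x = x.
Proof.
move=> inj cV x xV; apply/eqP; rewrite -subr_eq0; apply/eqP; apply: inj.
  by rewrite rpredB // Pr_mem.
by move=> k kb; rewrite !mxE Pr_entry // subrr.
Qed.

Lemma core_eq (V : {vspace rv}) :
  (forall x, x \in V -> (forall k, k \in b -> x 0 k = 0) -> x = 0) ->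
  (forall j, j \in b -> colv w j \in V) -> V = <<Xt>>%VS.
Proof.
move=> inj cV; apply/eqP; rewrite eqEsubv; apply/andP; split.
  apply/subvP => x xV; rewrite -(core_V inj cV xV); apply: Pr_mem => j jb.
  exact: Xt_mem.
apply/span_subvP => y /mapP[a _ ->]; apply: cV; exact: enum_valP.
Qed.

Lemma inj_Xt x : x \in <<Xt>>%VS -> (forall k, k \in b -> x 0 k = 0) -> x = 0.
Proof.
move=> xs xk; rewrite -(Pr_span xs) /Pr; apply: big1 => j jb.
by rewrite xk // scale0r.
Qed.

End Core.

Section Comb.
Variable d : nat.

Lemma sorted_sq (b : {set 'I_d}) : sorted ltn (sq d b).
Proof.
rewrite /sq /enum_mem /= -enumT sorted_map; apply: sorted_filter.
  by move=> x y z; apply: ltn_trans.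
by rewrite -sorted_map val_enum_ord iota_ltn_sorted.
Qed.

Lemma count_lt_nth (s : seq nat) l : sorted ltn s -> (l < size s)%N ->
  count (fun n => n < nth 0 s l)%N s = l /\
  count (fun n => n <= nth 0 s l)%N s = l.+1.
Proof.
elim: s l => [|a s IH] l //= so ls.
have allg : all (fun n => a < n)%N s.
  by apply: order_path_min so; move=> x y z; apply: ltn_trans.
have so' : sorted ltn s := path_sorted so.
case: l ls => [|l] ls /=.
  rewrite ltnn leqnn; split.
    by apply/eqP; rewrite -leqn0 leqNgt -has_count; apply/hasPn => x /(allP allg) /= h; rewrite ltnNge ltnW.
  rewrite add1n; congr _.+1; apply/eqP; rewrite -leqn0 leqNgt -has_count.
  by apply/hasPn => x /(allP allg) /= h; rewrite -ltnNge.
have [IH1 IH2] := IH l so' ls.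
have al : (a < nth 0 s l)%N by apply: (allP allg); apply: mem_nth.
by rewrite al (ltnW al) IH1 IH2.
Qed.


Lemma count_sum (T : Type) (P : pred T) (s : seq T) :
  count P s = (\sum_(x <- s) P x)%N.
Proof. by elim: s => [|a s IH]; rewrite ?big_nil ?big_cons //= IH. Qed.

Lemma count_sq (b : {set 'I_d}) x :
  count (fun n => n < x)%N (sq d b) = (\sum_(k in b) (val k < x))%N.
Proof. by rewrite count_map count_sum big_enum. Qed.

Lemma size_sq (b : {set 'I_d}) : size (sq d b) = #|b|.
Proof. by rewrite size_map cardE. Qed.

Lemma exch_lt (b : {set 'I_d}) (j i : 'I_d) :
  j \in b -> i \notin b -> (j < i)%N -> set_lt d b (i |: (b :\ j)).
Proof.
move=> jb ib ji; set b' := i |: (b :\ j).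
have ib' : i \notin b :\ j by rewrite inE negb_and ib orbT.
have cb : #|b'| = #|b| by rewrite cardsU1 ib' (cardsD1 j b) jb.
rewrite /set_lt /set_le cb eqxx /=; apply/andP; split; last first.
  apply/negP => /eqP eb; move: ib; rewrite eb.
  by rewrite /b' setU11.
apply/allP => l; rewrite mem_iota add0n => /= lb.
have cnt x : (count (fun n => n < x)%N (sq d b') <= count (fun n => n < x)%N (sq d b))%N.
  rewrite !count_sq /b' big_setU1 //= (big_setD1 j jb) /= leq_add2r.
  by case: (ltnP i x) => // ix; rewrite (ltn_trans ji ix).
rewrite leqNgt; apply/negP => lt.
have s1 : (l < size (sq d b))%N by rewrite size_sq.
have s2 : (l < size (sq d b'))%N by rewrite size_sq cb.
have [c1 _] := count_lt_nth (sorted_sq b) s1.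
have [_ c2] := count_lt_nth (sorted_sq b') s2.
have := cnt (nth 0 (sq d b) l); rewrite c1.
have : (count (fun n => n <= nth 0 (sq d b') l)%N (sq d b') <=
   count (fun n => n < nth 0 (sq d b) l)%N (sq d b'))%N.
  by apply: sub_count => n /= h; apply: leq_ltn_trans h lt.
by rewrite c2 => h1 h2; have := leq_trans h1 h2; rewrite ltnn.
Qed.

End Comb.

Lemma det_gale (K : fieldType) m (A : 'M[K]_m) (s s' : seq nat) :
  (forall l, (l < m)%N -> nth 0 s l <= nth 0 s' l)%N ->
  (exists l, (l < m)%N /\ (nth 0 s l < nth 0 s' l)%N) ->
  (forall a c : 'I_m, (nth 0 s a < nth 0 s' c)%N -> A a c = 0) -> \det A = 0.
Proof.
move=> le [l [lm lt]] A0; rewrite /determinant; apply: big1 => s0 _; pose σ : 'S_m := s0.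
case: (boolP [exists a : 'I_m, nth 0 s a < nth 0 s' (σ a)]%N) => [/existsP [a Ha] | H].
  by rewrite (bigD1 a) //= (A0 a (σ a) Ha) mul0r mulr0.
exfalso.
have H1 : (\sum_(a < m) nth 0 s' a <= \sum_(a < m) nth 0 s a)%N.
  rewrite (reindex_inj (@perm_inj _ σ)) /=; apply: leq_sum => a _.
  by rewrite leqNgt; apply/negP => h; move/negP: H; apply; apply/existsP; exists a.
have H2 : (\sum_(a < m) nth 0 s a < \sum_(a < m) nth 0 s' a)%N.
  rewrite (bigD1 (Ordinal lm)) //= [X in (_ < X)%N](bigD1 (Ordinal lm)) //=.
  by rewrite -addSn leq_add // leq_sum // => a _; apply: le.
by have := leq_trans H2 H1; rewrite ltnn.
Qed.


Lemma set_lt_strict d (b b' : {set 'I_d}) : set_lt d b b' ->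
  [/\ #|b| = #|b'|, (forall l, (l < #|b|)%N -> nth 0 (sq d b) l <= nth 0 (sq d b') l)%N &
     exists l, (l < #|b|)%N /\ (nth 0 (sq d b) l < nth 0 (sq d b') l)%N].
Proof.
rewrite /set_lt /set_le => /andP[/andP[/eqP cb /allP al] nb].
have le l : (l < #|b|)%N -> (nth 0 (sq d b) l <= nth 0 (sq d b') l)%N.
  by move=> lb; apply: al; rewrite mem_iota add0n.
split; [exact: cb | exact: le |].
case: (boolP [exists l : 'I_#|b|, nth 0 (sq d b) l < nth 0 (sq d b') l]%N).
  by move=> /existsP [l Hl]; exists l.
move=> H; exfalso; move/negP: nb; apply; apply/eqP.
have eqs : sq d b = sq d b'.
  apply: (@eq_from_nth _ 0); first by rewrite !size_sq cb.
  rewrite size_sq => l lb; apply/eqP; rewrite eqn_leq (le l lb) andTb.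
  by rewrite leqNgt; apply/negP => h; move/negP: H; apply; apply/existsP; exists (Ordinal lb).
have eb : enum b = enum b'.
  apply: (inj_map val_inj); exact: eqs.
apply/setP => x; rewrite -[x \in b]mem_enum -[x \in b']mem_enum eb //.
Qed.

Section Main.
Variables (K : fieldType) (Q0 Q1 : finType) (src tgt : Q1 -> Q0) (d : nat)
  (F : 'I_d -> Q0) (mu : Q1 -> 'I_d -> 'I_d -> K).
Notation rv := 'rV[K]_d.
Local Notation colv := (Defs.colv K d).
Local Notation Esp := (Defs.Esp K Q0 d F).
Local Notation Mv := (Defs.Mv K Q0 Q1 src tgt d F mu).
Local Notation gam := (Defs.gam K Q0 Q1 src tgt d F mu).
Local Notation rel2 := (Defs.rel2 Q0 d F).
Local Notation Epoly := (Defs.Epoly K Q0 Q1 src tgt d F mu).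

Lemma Esp_I p (x : rv) : (forall i, F i != p -> x 0 i = 0) -> x \in Esp p.
Proof.
move=> H; rewrite [x]row_sum_delta (bigID (fun i => F i == p)) /=.
rewrite [X in _ + X]big1 ?addr0; last by move=> i /H ->; rewrite scale0r.
apply: rpred_sum => i /eqP Fi; apply: rpredZ; apply: memv_span.
by apply/mapP; exists i => //; rewrite mem_filter Fi eqxx mem_enum.
Qed.

Lemma Esp_E p (x : rv) : x \in Esp p -> forall i, F i != p -> x 0 i = 0.
Proof.
rewrite /Defs.Esp; set X := map _ _ => /(@coord_span _ _ _ (in_tuple X)) xE i Fi.
rewrite xE sum_entry; apply: big1 => a _.
have : X`_a \in X by apply: mem_nth; exact: ltn_ord.
case/mapP => k; rewrite mem_filter => /andP[/eqP Fk _] ->.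
rewrite mxE /=; case: eqP => [ik|]; last by rewrite mulr0.
by move: Fi; rewrite ik Fk eqxx.
Qed.

Definition Ewf (w : 'I_d -> 'I_d -> K) v t s :=
  \sum_(s' : 'I_d) \sum_(t' : 'I_d)
     (if gam v s' t' then mu v s' t' * (w t t' * w s' s) else 0)
  - \sum_(s' : 'I_d) (if gam v s' t then mu v s' t * w s' s else 0).

Lemma Ewf_eq (b : {set 'I_d}) (w : 'M[K]_d) v t s :
  (forall i j, j \notin b -> w i j = 0) ->
  Ewf w v t s = Pr b w (colv w s *m Mv v) 0 t - (colv w s *m Mv v) 0 t.
Proof.
move=> wb; rewrite /Ewf /Pr sum_entry /Defs.colv; congr (_ - _); last first.
  rewrite mxE; apply: eq_bigr => s' _; rewrite !mxE /gam.
  case: (F s' == src v); case: (F t == tgt v) => /=; rewrite ?mulr0 //.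
  by case: eqP => [->|_] /=; rewrite ?mulr0 ?mul0r // mulrC.
rewrite [RHS]big_mkcond /=.
transitivity (\sum_(a < d) (\row_i w i s *m Mv v) 0 a * w t a); last first.
  apply: eq_bigr => a _; case: ifP => ab; rewrite mxE //.
  by rewrite wb ?ab // mulr0.
rewrite exchange_big; apply: eq_bigr => t' _; rewrite mxE mulr_suml.
apply: eq_bigr => s' _; rewrite !mxE /gam.
case: (F s' == src v); case: (F t' == tgt v) => /=; rewrite ?mulr0 ?mul0r //.
case: eqP => [->|_] /=; rewrite ?mulr0 ?mul0r //.
by ring.
Qed.

Definition wof (ev : {ffun rel2 -> option K}) (i j : 'I_d) : K :=
  match insub (i, j) : option rel2 with
  | Some k => odflt 0 (ev k)
  | None => 0
  end.

Lemma wof_val ev (k : rel2) : wof ev (val k).1 (val k).2 = odflt 0 (ev k).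
Proof. by rewrite /wof -surjective_pairing valK. Qed.

Lemma wof_out ev i j : ~~ rel2b Q0 d F (i, j) -> wof ev i j = 0.
Proof. by move=> h; rewrite /wof insubN. Qed.

Lemma wvar_eval ev i j :
  (wvar K Q0 d F i j).@[eval_at K Q0 d F ev] = wof ev i j.
Proof.
rewrite /wvar /wof; case: (insub (i, j)) => [k|] /=; last by rewrite meval0.
by rewrite mevalXU /eval_at enum_rankK.
Qed.

Lemma msum n (v : 'I_n -> K) (I : Type) (r : seq I) (f : I -> {mpoly K[n]}) :
  (\sum_(i <- r) f i).@[v] = \sum_(i <- r) (f i).@[v].
Proof. exact: (big_morph _ (mevalD v) (meval0 v)). Qed.

Lemma Epoly_eval ev v t s :
  (Epoly v t s).@[eval_at K Q0 d F ev] = Ewf (wof ev) v t s.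
Proof.
rewrite /Epoly /Ewf mevalB !msum; congr (_ - _).
  apply: eq_bigr => s' _; rewrite msum; apply: eq_bigr => t' _.
  by case: (gam v s' t'); rewrite ?meval0 // mevalZ mevalM !wvar_eval.
apply: eq_bigr => s' _.
by case: (gam v s' t); rewrite ?meval0 // mevalZ !wvar_eval.
Qed.

End Main.

Section Main2.
Variables (K : fieldType) (Q0 Q1 : finType) (src tgt : Q1 -> Q0) (d : nat)
  (F : 'I_d -> Q0) (mu : Q1 -> 'I_d -> 'I_d -> K).
Notation rv := 'rV[K]_d.
Local Notation colv := (Defs.colv K d).
Local Notation Esp := (Defs.Esp K Q0 d F).
Local Notation Mv := (Defs.Mv K Q0 Q1 src tgt d F mu).
Local Notation gam := (Defs.gam K Q0 Q1 src tgt d F mu).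
Local Notation rel2 := (Defs.rel2 Q0 d F).
Local Notation Epoly := (Defs.Epoly K Q0 Q1 src tgt d F mu).
Local Notation in_CM := (Defs.in_CM K Q0 Q1 src tgt d F mu).
Local Notation normal_form := (Defs.normal_form K Q0 d F).

Lemma span_entry0 (X : seq rv) i : (forall x, x \in X -> x 0 i = 0) ->
  forall y, y \in <<X>>%VS -> y 0 i = 0.
Proof.
move=> H y /(@coord_span _ _ _ (in_tuple X)) yE.
rewrite yE sum_entry; apply: big1 => a _.
by rewrite H ?mulr0 //; apply: mem_nth; exact: ltn_ord.
Qed.

Lemma free_cols (b : {set 'I_d}) (w : 'M[K]_d) (s : seq 'I_d) :
  (forall j, j \in b -> w j j = 1) ->
  (forall i j, i \in b -> j \in b -> i != j -> w i j = 0) ->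
  uniq s -> {subset s <= b} -> free (map (colv w) s).
Proof.
move=> W1 W2; elim: s => [|j s IH] /=; first by move=> *; exact: nil_free.
case/andP=> js us sb; rewrite free_cons IH //; last by move=> k ks; apply: sb; rewrite inE ks orbT.
have jb : j \in b by apply: sb; rewrite inE eqxx.
rewrite andbT; apply/negP => /(span_entry0 (i := j)) H.
have : colv w j 0 j = 0.
  apply: H => x /mapP[k ks ->]; rewrite mxE W2 //; first by apply: sb; rewrite inE ks orbT.
  by apply/eqP => e; move: js; rewrite e ks.
by rewrite mxE W1 // => /eqP; rewrite oner_eq0.
Qed.

Lemma minor_iff (V : {vspace rv}) (b' : {set 'I_d}) : \dim V = #|b'| ->
  (minor K d V b' != 0 <-> forall x, x \in V -> (forall k, k \in b' -> x 0 k = 0) -> x = 0).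
Proof.
move=> dV; pose X := tcast dV (vbasis V).
have fX : free X by rewrite val_tcast; exact: basis_free (vbasisP V).
have sX : <<X>>%VS = V by rewrite val_tcast; exact: span_basis (vbasisP V).
have := @char_minor K d #|b'| X V enum_val fX sX; rewrite val_tcast => ->.
split => H x xV xk; apply: H => //.
  by move=> c; apply: xk; exact: enum_valP.
by move=> k kb; rewrite -(enum_rankK_in kb kb); apply: xk.
Qed.

Lemma inj_CM b V : in_CM b V ->
  forall x, x \in V -> (forall k, k \in b -> x 0 k = 0) -> x = 0.
Proof. by case=> _ [dV mn _]; apply/(minor_iff dV). Qed.

Lemma nf_intro (b : {set 'I_d}) (V : {vspace rv}) (w : 'M[K]_d) :
  (forall x, x \in V -> (forall k, k \in b -> x 0 k = 0) -> x = 0) ->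
  (forall j, j \in b -> colv w j \in V) ->
  (forall j, j \in b -> w j j = 1) ->
  (forall i j, i \in b -> j \in b -> i != j -> w i j = 0) ->
  (forall i j : 'I_d, j \in b -> (j < i)%N -> w i j = 0) ->
  (forall i j, j \notin b -> w i j = 0) ->
  (forall i j, j \in b -> F i != F j -> w i j = 0) ->
  normal_form b V w.
Proof.
move=> inj cV W1 W2 low nb Fp; split; last by split.
split; last first.
  move=> i j /orP [jb | Fij]; first by apply: nb.
  by case jb: (j \in b); [apply: Fp | apply: nb; rewrite jb].
move=> p; rewrite /basis_of; apply/andP; split; last first.
  apply: free_cols W1 W2 _ _; first by rewrite filter_uniq // enum_uniq.
  by move=> j; rewrite mem_filter mem_enum => /andP[_].
rewrite eqEsubv; apply/andP; split.
  apply/span_subvP => y /mapP [j]; rewrite mem_filter mem_enum => /andP[/eqP Fj jb] ->.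
  rewrite memv_cap cV // andTb; apply: Esp_I => i Fi; rewrite mxE; apply: Fp => //; by rewrite Fj.
apply/subvP => x; rewrite memv_cap => /andP[xV xE].
rewrite -(core_V W1 W2 inj cV xV) /Pr.
rewrite (bigID (fun j => F j == p)) /= [X in _ + X]big1 ?addr0; last first.
  by move=> j /andP[jb Fj]; rewrite (Esp_E xE) ?scale0r.
apply: rpred_sum => j /andP[jb Fj]; apply: rpredZ; apply: memv_span.
by apply/mapP; exists j => //; rewrite mem_filter Fj mem_enum.
Qed.

End Main2.

Section Main3.
Variables (K : fieldType) (Q0 Q1 : finType) (src tgt : Q1 -> Q0) (d : nat)
  (F : 'I_d -> Q0) (mu : Q1 -> 'I_d -> 'I_d -> K).
Notation rv := 'rV[K]_d.
Local Notation colv := (Defs.colv K d).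
Local Notation Esp := (Defs.Esp K Q0 d F).
Local Notation Mv := (Defs.Mv K Q0 Q1 src tgt d F mu).
Local Notation gam := (Defs.gam K Q0 Q1 src tgt d F mu).
Local Notation rel2 := (Defs.rel2 Q0 d F).
Local Notation Epoly := (Defs.Epoly K Q0 Q1 src tgt d F mu).
Local Notation in_CM := (Defs.in_CM K Q0 Q1 src tgt d F mu).
Local Notation normal_form := (Defs.normal_form K Q0 d F).

Lemma ex_delta (b : {set 'I_d}) V : in_CM b V -> forall j, j \in b ->
  exists y : rv, [/\ y \in V, y \in Esp (F j) & forall k, k \in b -> y 0 k = (k == j)%:R].
Proof.
case=> [[decomp clos] [dimV mn0 _]] j jb.
pose X := tcast dimV (vbasis V).
have XV (a : 'I_#|b|) : X`_a \in V.
  rewrite val_tcast; apply: vbasis_mem; apply: mem_nth; rewrite size_tuple dimV; exact: ltn_ord.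
pose A := \matrix_(a < #|b|, c < #|b|) X`_a 0 (enum_val c).
have Au : A \in unitmx by rewrite unitmxE unitfE /A val_tcast.
pose a := enum_rank_in jb j.
pose y0 := \sum_(b0 < #|b|) invmx A a b0 *: X`_b0.
have y0V : y0 \in V by apply: rpred_sum => b0 _; apply: rpredZ.
have y0d k : k \in b -> y0 0 k = (k == j)%:R.
  move=> kb; set c := enum_rank_in kb k.
  have kc : k = enum_val c by rewrite enum_rankK_in.
  have -> : (k == j) = (a == c).
    apply/eqP/eqP => [e|e]; first by apply: enum_val_inj; rewrite !enum_rankK_in // -e.
    by rewrite kc -e /a enum_rankK_in.
  have := congr1 (fun M : 'M_#|b| => M a c) (mulVmx Au).
  rewrite !mxE => <-; rewrite kc sum_entry; apply: eq_bigr => b0 _; by rewrite !mxE.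
have := y0V; rewrite {1}decomp => /memv_sumP [vs vsP y0E].
have vsp p : (vs p \in V) && (vs p \in Esp p) by rewrite -memv_cap; apply: vsP.
have vsE p : vs p \in Esp p by have /andP[] := vsp p.
have vsV p : vs p \in V by have /andP[] := vsp p.
have y0k k : y0 0 k = vs (F k) 0 k.
  rewrite y0E summxE (bigD1 (F k)) //= big1 ?addr0 // => p pk.
  by apply: (Esp_E (vsE p)); rewrite eq_sym.
exists (vs (F j)); split => // k kb.
case: (eqVneq (F k) (F j)) => Fkj; first by rewrite -Fkj -y0k y0d.
rewrite (Esp_E (vsE (F j))) //.
by case: eqP => // e; move: Fkj; rewrite e eqxx.
Qed.

Lemma fwd_nf (b : {set 'I_d}) V : in_CM b V -> exists w, normal_form b V w.
Proof.
move=> HC; have inj := inj_CM HC.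
have ex j : exists y : rv, (j \in b) ==> [&& y \in V, y \in Esp (F j) &
     [forall k, (k \in b) ==> (y 0 k == (k == j)%:R)]].
  case jb: (j \in b); last by exists 0.
  have [y [yV yE yd]] := ex_delta HC jb; exists y; rewrite yV yE /=.
  by apply/forallP => k; apply/implyP => kb; rewrite yd.
pose nf j := xchoose (ex j).
have nfP j : j \in b -> [/\ nf j \in V, nf j \in Esp (F j) &
    forall k, k \in b -> nf j 0 k = (k == j)%:R].
  move=> jb; have /implyP/(_ jb)/and3P[h1 h2 /forallP h3] := xchooseP (ex j).
  by split=> // k kb; apply/eqP; have := h3 k; rewrite kb.
pose w : 'M[K]_d := \matrix_(i, j) (if j \in b then nf j 0 i else 0).
have wE i j : w i j = if j \in b then nf j 0 i else 0 by rewrite mxE.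
have cw j : j \in b -> colv w j = nf j by move=> jb; apply/rowP => i; rewrite !mxE jb.
have W1 j : j \in b -> w j j = 1.
  by move=> jb; rewrite wE jb; have [_ _ ->] := nfP j jb; rewrite ?eqxx.
have W2 i j : i \in b -> j \in b -> i != j -> w i j = 0.
  by move=> ib jb ij; rewrite wE jb; have [_ _ ->] := nfP j jb; rewrite ?(negbTE ij).
have nb i j : j \notin b -> w i j = 0 by move=> jb; rewrite wE (negbTE jb).
have Fp i j : j \in b -> F i != F j -> w i j = 0.
  by move=> jb Fij; rewrite wE jb; have [_ E _] := nfP j jb; apply: (Esp_E E).
have cV j : j \in b -> colv w j \in V by move=> jb; rewrite cw //; have [] := nfP j jb.
exists w; apply: nf_intro => //.
move=> i j jb ji; case ib: (i \in b).
  by apply: W2 => //; rewrite eq_sym neq_ltn ji.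
apply/eqP/negPn/negP => wne.
set b' := i |: (b :\ j).
have lt := exch_lt jb (negbT ib) ji.
have [cb _ _] := set_lt_strict lt.
have [_ [dimV _ mlt]] := HC.
have m0 := mlt b' lt.
have dimV' : \dim V = #|b'| by rewrite dimV.
have : minor K d V b' != 0.
  apply/(minor_iff dimV') => x xV xk.
  have xP := core_V W1 W2 inj cV xV.
  have xe : x = x 0 j *: colv w j.
    rewrite -{1}xP /Pr (bigD1 j) //= big1 ?addr0 // => k /andP[kb kj].
    by rewrite xk ?scale0r // !inE kj kb orbT.
  have xi : x 0 i = 0 by apply: xk; rewrite !inE eqxx.
  have : x 0 j * w i j = 0 by rewrite -xi {2}xe !mxE.
  move/eqP; rewrite mulf_eq0 (negbTE wne) orbF => /eqP xj.
  by rewrite xe xj scale0r.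
by rewrite m0 eqxx.
Qed.

End Main3.

Section Main4.
Variables (K : fieldType) (Q0 Q1 : finType) (src tgt : Q1 -> Q0) (d : nat)
  (F : 'I_d -> Q0) (mu : Q1 -> 'I_d -> 'I_d -> K).
Notation rv := 'rV[K]_d.
Local Notation colv := (Defs.colv K d).
Local Notation Esp := (Defs.Esp K Q0 d F).
Local Notation Mv := (Defs.Mv K Q0 Q1 src tgt d F mu).
Local Notation gam := (Defs.gam K Q0 Q1 src tgt d F mu).
Local Notation rel2 := (Defs.rel2 Q0 d F).
Local Notation Epoly := (Defs.Epoly K Q0 Q1 src tgt d F mu).
Local Notation in_CM := (Defs.in_CM K Q0 Q1 src tgt d F mu).
Local Notation normal_form := (Defs.normal_form K Q0 d F).
Local Notation in_Ev := (Defs.in_Ev K Q0 Q1 src tgt d F mu).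
Local Notation total_ev := (Defs.total_ev K Q0 d F).
Local Notation Ew := (Ewf src tgt F mu).
Local Notation Ew_eq := (Ewf_eq src tgt F mu).

Lemma nf_colV b V w : normal_form b V w -> forall j, j \in b -> colv w j \in V.
Proof.
case=> [[bas _] _] j jb.
have /andP[/eqP sp _] := bas (F j).
have : colv w j \in (V :&: Esp (F j))%VS.
  rewrite -sp; apply: memv_span; apply/mapP; exists j => //.
  by rewrite mem_filter eqxx mem_enum.
by rewrite memv_cap => /andP[].
Qed.

Lemma nf_unique b V w w' : in_CM b V -> normal_form b V w -> normal_form b V w' -> w = w'.
Proof.
move=> HC nw nw'; have inj := inj_CM HC.
have c1 := nf_colV nw; have c2 := nf_colV nw'.
case: nw => _ [W1 W2 _ nb _]; case: nw' => _ [W1' W2' _ nb' _].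
apply/matrixP => i j; case jb: (j \in b); last by rewrite nb ?nb' ?jb.
have : colv w j - colv w' j = 0.
  apply: inj; first by rewrite rpredB ?c1 ?c2.
  move=> k kb; rewrite !mxE; case: (eqVneq k j) => [->|kj].
    by rewrite W1 ?W1' ?subrr.
  by rewrite W2 ?W2' ?subrr.
move/rowP/(_ i); rewrite !mxE; move/eqP; rewrite subr_eq0; by move/eqP.
Qed.

Definition ev_of (w : 'M[K]_d) : {ffun rel2 -> option K} :=
  [ffun k : rel2 => Some (w (val k).1 (val k).2)].

Lemma nf_pat b V w : normal_form b V w -> forall i j, ~~ rel2b Q0 d F (i, j) -> w i j = 0.
Proof.
case=> _ [_ _ low nb Fp] i j; rewrite /rel2b /= negb_and -ltnNge => /orP[Fij|ji].
  by case jb: (j \in b); [apply: Fp | apply: nb; rewrite jb].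
by case jb: (j \in b); [apply: low | apply: nb; rewrite jb].
Qed.

Lemma wof_ev b V w : normal_form b V w -> forall i j, wof (ev_of w) i j = w i j.
Proof.
move=> nw i j; rewrite /wof; case: insubP => [k kP kE|nP].
  by rewrite ffunE /= kE.
by rewrite (nf_pat nw).
Qed.

Lemma Ew_ext (f g : 'I_d -> 'I_d -> K) v t s : (forall i j, f i j = g i j) ->
  Ew f v t s = Ew g v t s.
Proof.
move=> H; rewrite /Ewf; congr (_ - _); apply: eq_bigr => s' _.
  by apply: eq_bigr => t' _; rewrite !H.
by rewrite !H.
Qed.

Lemma Ew_nf b V w : in_CM b V -> normal_form b V w ->
  forall v t s, F s = src v -> Ew w v t s = 0.
Proof.
move=> HC nw v t s Fs; have cV := nf_colV nw.
have [_ [W1 W2 _ nb Fp]] := nw.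
case sb: (s \in b); last first.
  have z s' : w s' s = 0 by rewrite nb ?sb.
  rewrite /Ewf; under eq_bigr => s' _ do under eq_bigr => t' _ do rewrite z !mulr0 if_same.
  under [X in _ - X]eq_bigr => s' _ do rewrite z !mulr0 if_same.
  by rewrite !big1_eq subrr.
rewrite (Ew_eq (b := b)) //.
have [[_ clos] _] := HC.
have yV : colv w s *m Mv v \in V.
  apply: (subvP (clos v)).
  have -> : colv w s *m Mv v = (linfun (mulmxr (Mv v))) (colv w s) by rewrite lfunE.
  apply: memv_img; rewrite memv_cap cV // andTb -Fs.
  by apply: Esp_I => i Fi; rewrite mxE Fp.
by rewrite (core_V W1 W2 (inj_CM HC) cV yV) subrr.
Qed.

Lemma nf_ev b V w : in_CM b V -> normal_form b V w ->
  total_ev (ev_of w) /\ in_Ev b (ev_of w).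
Proof.
move=> HC nw; split; first by move=> k; rewrite ffunE.
split.
  move=> v t s r3 k _ _; split; first by rewrite ffunE.
  rewrite Epoly_eval.
  rewrite (Ew_ext (g := fun_of_matrix w)); last by move=> i j; rewrite (wof_ev nw).
  apply: (Ew_nf HC nw); by case/and3P: r3 => /eqP.
have [_ [W1 W2 _ nb _]] := nw.
move=> k c; rewrite /f_beta ffunE.
case: ifP => [/andP[/eqP e ib] [<-]|_]; first by rewrite -e W1.
case: ifP => [/andP[ib ij] [<-]|_].
  case jb: ((val k).2 \in b); first by rewrite W2.
  by rewrite nb ?jb.
by case: ifP => // jb [<-]; rewrite nb.
Qed.

End Main4.

Section Main5.
Variables (K : fieldType) (Q0 Q1 : finType) (src tgt : Q1 -> Q0) (d : nat)
  (F : 'I_d -> Q0) (mu : Q1 -> 'I_d -> 'I_d -> K).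
Notation rv := 'rV[K]_d.
Local Notation colv := (Defs.colv K d).
Local Notation Esp := (Defs.Esp K Q0 d F).
Local Notation Mv := (Defs.Mv K Q0 Q1 src tgt d F mu).
Local Notation gam := (Defs.gam K Q0 Q1 src tgt d F mu).
Local Notation rel2 := (Defs.rel2 Q0 d F).
Local Notation Epoly := (Defs.Epoly K Q0 Q1 src tgt d F mu).
Local Notation in_CM := (Defs.in_CM K Q0 Q1 src tgt d F mu).
Local Notation normal_form := (Defs.normal_form K Q0 d F).
Local Notation in_Ev := (Defs.in_Ev K Q0 Q1 src tgt d F mu).
Local Notation total_ev := (Defs.total_ev K Q0 d F).
Local Notation Ew := (Ewf src tgt F mu).
Local Notation Ew_eq := (Ewf_eq src tgt F mu).
Local Notation rel2b := (Defs.rel2b Q0 d F).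

Variables (b : {set 'I_d}) (ev : {ffun rel2 -> option K}).
Variables (tot : total_ev ev) (iE : in_Ev b ev).

Definition Wm : 'M[K]_d := \matrix_(i, j) wof ev i j.

Lemma Wm_f i j (h : rel2b (i, j)) c :
  f_beta K Q0 d F b (Sub (i, j) h) = Some c -> Wm i j = c.
Proof.
move=> fb; rewrite mxE /wof insubT.
by have [_ fE] := iE; rewrite (fE _ _ fb).
Qed.

Lemma Wm_out i j : ~~ rel2b (i, j) -> Wm i j = 0.
Proof. by move=> h; rewrite mxE wof_out. Qed.

Lemma Wm1 j : j \in b -> Wm j j = 1.
Proof.
move=> jb; have h : rel2b (j, j) by rewrite /rel2b /= eqxx leqnn.
by apply: (@Wm_f j j h 1); rewrite /f_beta SubK /= eqxx jb.
Qed.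

Lemma Wm2 i j : i \in b -> j \in b -> i != j -> Wm i j = 0.
Proof.
move=> ib jb ij; case h: (rel2b (i, j)); last by rewrite Wm_out ?h.
by apply: (@Wm_f i j h 0); rewrite /f_beta SubK /= (negbTE ij) ib.
Qed.

Lemma Wm_low (i j : 'I_d) : (j < i)%N -> Wm i j = 0.
Proof. by move=> ji; rewrite Wm_out // /rel2b /= negb_and -ltnNge ji orbT. Qed.

Lemma Wm_nb i j : j \notin b -> Wm i j = 0.
Proof.
move=> jb; case h: (rel2b (i, j)); last by rewrite Wm_out ?h.
apply: (@Wm_f i j h 0); rewrite /f_beta SubK /=.
have -> : (i == j) && (i \in b) = false.
  by case: eqP => //= ->; rewrite (negbTE jb).
by case: ifP => //; rewrite jb.
Qed.

Lemma Wm_F i j : F i != F j -> Wm i j = 0.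
Proof. by move=> Fij; rewrite Wm_out // /rel2b /= (negbTE Fij). Qed.

Lemma no_nbr v t s : (forall k, ~~ nbr K Q0 Q1 src tgt d F mu v t s k) ->
  forall x y, (Epoly v t s).@[x] = (Epoly v t s).@[y].
Proof.
move=> H x y; rewrite !mevalE; apply: eq_big_seq => m mm.
have m0 i : m i = 0%N.
  have := H (enum_val i); rewrite /nbr enum_valK => /hasPn/(_ m mm).
  by rewrite lt0n negbK => /eqP.
by rewrite !big1 // => i _; rewrite m0 expr0.
Qed.

Lemma Ew0 v t s : Ew (fun _ _ => 0) v t s = 0.
Proof.
rewrite /Ewf big1 ?[X in _ - X]big1 ?subrr // => s' _.
  by rewrite mulr0 if_same.
by apply: big1 => t' _; rewrite mulr0 mulr0 if_same.
Qed.

Lemma Wm_E v t s : F s = src v -> Ew Wm v t s = 0.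
Proof.
move=> Fs.
case: (eqVneq (F t) (tgt v)) => Ft; last first.
  have z2 : \sum_(s' < d) (if gam v s' t then mu v s' t * Wm s' s else 0) = 0.
    by apply: big1 => s' _; rewrite /Defs.gam (negbTE Ft) andbF.
  rewrite /Ewf z2 subr0; apply: big1 => s' _; apply: big1 => t' _.
  case: ifP => // /and3P[_ /eqP Ft' _].
  by rewrite Wm_F ?mul0r ?mulr0 // Ft'.
case r3: (rel3 K Q0 Q1 src tgt d F mu v t s).
  have Ee : (Epoly v t s).@[eval_at K Q0 d F ev] = 0.
    case: (boolP [exists k, nbr K Q0 Q1 src tgt d F mu v t s k]) => [/existsP[k nk] | nn].
      have [pe _] := iE.
      by have [_ ->] := pe v t s r3 k nk (fun k' _ _ => tot k').
    rewrite (@no_nbr v t s _ _ (eval_at K Q0 d F [ffun=> None])); last first.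
      by move=> k; apply/negP => nk; move/negP: nn; apply; apply/existsP; exists k.
    rewrite Epoly_eval -[RHS](Ew0 v t s); apply: Ew_ext => i j.
    by rewrite /wof; case: (insub _) => // k; rewrite ffunE.
  by rewrite Epoly_eval in Ee; rewrite -Ee; apply: Ew_ext => i j; rewrite mxE.
have nex s' t' : gam v s' t' -> ~~ ((s' <= s) && (t <= t'))%N.
  move: r3; rewrite /rel3 Fs Ft !eqxx /= => /negbT/existsPn/(_ s')/existsPn/(_ t').
  by move=> h g; move: h; rewrite g.
rewrite /Ewf big1 ?[X in _ - X]big1 ?subrr // => s' _.
  case: ifP => // g; have := nex s' t g; rewrite leqnn andbT -ltnNge => h.
  by rewrite Wm_low // mulr0.
apply: big1 => t' _; case: ifP => // g.
have := nex s' t' g; rewrite negb_and -!ltnNge => /orP[h|h].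
  by rewrite (Wm_low h) !mulr0.
by rewrite (Wm_low h) mul0r mulr0.
Qed.

Local Notation V0 := (<<Xt b Wm>>%VS).

Lemma Wm_cl v s : s \in b -> F s = src v -> colv Wm s *m Mv v \in V0.
Proof.
move=> sb Fs; set y := _ *m _.
have : Pr b Wm y = y.
  apply/rowP => t; apply/eqP; rewrite -subr_eq0.
  have := @Ew_eq b Wm v t s (@Wm_nb); rewrite Wm_E // => <-.
  by [].
move=> <-; apply: Pr_mem => j jb; exact: Xt_mem.
Qed.

Lemma sq_nth (A : {set 'I_d}) (c : 'I_#|A|) : nth 0%N (sq d A) c = val (enum_val c).
Proof.
rewrite /sq (nth_map (enum_val c)); last by rewrite -cardE.
by rewrite -enum_val_nth.
Qed.

Lemma V0_CM : in_CM b V0.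
Proof.
split.
  split.
    apply/eqP; rewrite eqEsubv; apply/andP; split.
      apply/span_subvP => y /mapP[a _ ->]; set j := enum_val a.
      rewrite memvE; apply: (sumv_sup (F j)) => //; rewrite -memvE memv_cap.
      rewrite Xt_mem ?enum_valP //=; apply: Esp_I => i Fi; rewrite mxE.
      exact: Wm_F.
    by apply/subv_sumP => p _; exact: capvSl.
  move=> v; apply/subvP => y /memv_imgP[x xU ->]; rewrite lfunE /=.
  move: xU; rewrite memv_cap => /andP[xV xE].
  rewrite -(Pr_span Wm1 Wm2 xV) /Pr mulmx_suml; apply: rpred_sum => j jb.
  rewrite -scalemxAl; case: (eqVneq (F j) (src v)) => Fj.
    by apply: rpredZ; apply: Wm_cl.
  by rewrite (Esp_E xE) // scale0r rpred0.
have dV := dim_Xt Wm1 Wm2.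
split => //.
  apply/(minor_iff dV) => x xV xk; exact: (@inj_Xt K d b Wm Wm1 Wm2 x xV xk).
move=> b' lt; apply/eqP/negPn/negP => H.
have [cb le [l [lb ll]]] := set_lt_strict lt.
have dV' : \dim V0 = #|b'| by rewrite dV.
have inj' := (minor_iff dV').1 H.
pose X := tcast cb (Xt b Wm).
have fX : free X by rewrite val_tcast; exact: (free_Xt Wm1 Wm2).
have sX : <<X>>%VS = V0 by rewrite val_tcast.
have := (@char_minor K d #|b'| X V0 enum_val fX sX).2.
have hyp : forall x, x \in V0 -> (forall c : 'I_#|b'|, x 0 (enum_val c) = 0) -> x = 0.
  move=> x xV xc; apply: (inj' x xV) => k kb; rewrite -(enum_rankK_in kb kb); exact: xc.
move/(_ hyp)/eqP; apply.
apply: (@det_gale K #|b'| _ (sq d b) (sq d b')).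
- by move=> l' l'b; apply: le; rewrite cb.
- by exists l; rewrite -cb.
move=> a c lt'; rewrite mxE val_tcast.
have ab : (a < #|b|)%N by rewrite cb.
have -> : (Xt b Wm)`_a = (Xt b Wm)`_(Ordinal ab) by [].
rewrite Xt_nth mxE; apply: Wm_low.
by rewrite -!sq_nth.
Qed.

Lemma V0_nf : normal_form b V0 Wm.
Proof.
apply: nf_intro.
- by move=> x xV xk; exact: (@inj_Xt K d b Wm Wm1 Wm2 x xV xk).
- by move=> j jb; exact: Xt_mem.
- exact: Wm1.
- exact: Wm2.
- by move=> i j _ h; exact: Wm_low.
- exact: Wm_nb.
- by move=> i j _ h; exact: Wm_F.
Qed.

End Main5.

Lemma sig_eq (A : Type) (P : A -> Prop) (x y : {a | P a}) : sval x = sval y -> x = y.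
Proof.
case: x => a pa; case: y => a' pa' /= e; subst a'.
by rewrite (proof_irrelevance _ pa pa').
Qed.

Theorem lemma2p7 (K : fieldType) (Q0 Q1 : finType) (src tgt : Q1 -> Q0)
  (d : nat) (F : 'I_d -> Q0) (mu : Q1 -> 'I_d -> 'I_d -> K)
  (beta : {set 'I_d}) :
  (exists Phi : {V : {vspace 'rV[K]_d} | in_CM K Q0 Q1 src tgt d F mu beta V} ->
                {ev : {ffun rel2 Q0 d F -> option K} |
                   total_ev K Q0 d F ev /\ in_Ev K Q0 Q1 src tgt d F mu beta ev},
     [/\ bijective Phi,
         forall N : {V : {vspace 'rV[K]_d} | in_CM K Q0 Q1 src tgt d F mu beta V}, exists w : 'M[K]_d, normal_form K Q0 d F beta (sval N) w &
         forall (N : {V : {vspace 'rV[K]_d} | in_CM K Q0 Q1 src tgt d F mu beta V}) (w : 'M[K]_d), normal_form K Q0 d F beta (sval N) w ->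
           forall k : rel2 Q0 d F,
             sval (Phi N) k = Some (w (val k).1 (val k).2)])
  /\
  ((forall ev : {ffun rel2 Q0 d F -> option K},
      ~ in_Ev K Q0 Q1 src tgt d F mu beta ev) ->
   forall V : {vspace 'rV[K]_d}, ~ in_CM K Q0 Q1 src tgt d F mu beta V).
Proof.
split; last first.
  move=> H V HC; have [w nw] := fwd_nf HC.
  by have [_ iE] := nf_ev HC nw; apply: (H _ iE).
pose CT := {V : {vspace 'rV[K]_d} | in_CM K Q0 Q1 src tgt d F mu beta V}.
have exw (N : CT) : exists w, normal_form K Q0 d F beta (sval N) w.
  exact: fwd_nf (svalP N).
pose wN (N : CT) := proj1_sig (constructive_indefinite_description _ (exw N)).
have wNP (N : CT) : normal_form K Q0 d F beta (sval N) (wN N).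
  exact: proj2_sig (constructive_indefinite_description _ (exw N)).
pose Phi (N : CT) := exist (fun ev => total_ev K Q0 d F ev /\ in_Ev K Q0 Q1 src tgt d F mu beta ev)
  (ev_of F (wN N)) (nf_ev (svalP N) (wNP N)).
have wNu (N : CT) w : normal_form K Q0 d F beta (sval N) w -> wN N = w.
  by move=> nw; apply: (nf_unique (svalP N) (wNP N) nw).
exists Phi; split.
- pose g (e : {ev : {ffun rel2 Q0 d F -> option K} |
                   total_ev K Q0 d F ev /\ in_Ev K Q0 Q1 src tgt d F mu beta ev}) : CT :=
    exist _ _ (V0_CM (proj1 (svalP e)) (proj2 (svalP e))).
  exists g.
  + move=> N; apply: sig_eq => /=.
    have nw := wNP N.
    have eW : Wm (ev_of F (wN N)) = wN N.
      by apply/matrixP => i j; rewrite mxE (wof_ev nw).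
    rewrite eW; have [_ [W1 W2 _ _ _]] := nw.
    by symmetry; apply: (core_eq W1 W2 (inj_CM (svalP N)) (nf_colV nw)).
  + move=> e; apply: sig_eq => /=.
    have nw := V0_nf (proj2 (svalP e)).
    rewrite (wNu (g e) _ nw); apply/ffunP => k; rewrite ffunE mxE wof_val.
    by have := proj1 (svalP e) k; case: (sval e k).
- by move=> N; exists (wN N).
- by move=> N w nw k; rewrite /= (wNu N w nw) ffunE.
Qed.
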